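(* Let $n\ge 2$ be even and $k\ge 3$. Then every Jenga-like configuration $Q$ of the $(n,k)$-game satisfies $$ g(Q)\le \frac{n(n-2)(k-2)}{2}. $$
   Context: The $(n,k)$-game is played with $nk$ blocks, each a box of length $n$, width $1$, height $1$. Level $i$ occupies heights $[i-1,i]$ and has $n$ slots $j=1,\dots,n$; a block in slot $j$ of an odd level $i$ is $[0,n]\times[j-1,j]\times[i-1,i]$, and of an even level $i$ is $[j-1,j]\times[0,n]\times[i-1,i]$. The initial configuration has $k$ full levels. A move removes exactly one block from a level which is not the topmost level and, when the topmost level is incomplete (fewer than $n$ blocks), is not the level immediately below the topmost level, and places it in an empty slot of the topmost level if that level is incomplete, or in a slot of a new level on top otherwise. A Jenga-like configuration is one obtainable from the initial configuration by finitely many moves in which every level up to the topmost contains at least one block. $g(Q)$ is the genus of the boundary surface of the union of the blocks of $Q$ (a connected closed polyhedral surface). *)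

(* Defs.v *)
From HB Require Import structures.
From mathcomp Require Import all_boot all_order all_algebra.
Set Implicit Arguments. Unset Strict Implicit. Unset Printing Implicit Defensive.
Import Order.TTheory GRing.Theory Num.Theory.

(* A configuration is the list of its levels, bottom (level 1) first;  *)
(* a level is the set of its occupied slots, slot j (1 <= j <= n) being *)
(* represented by the ordinal j-1 : 'I_n.  The topmost level is the     *)
(* last element of the list.                                           *)

Definition config (n : nat) := seq {set 'I_n}.

Definition initial (n k : nat) : config n := nseq k [set: 'I_n].

(* One move: remove block j from level i (0-based), which is not the   *)
(* topmost and, if the top is incomplete, not the one just below it;   *)
(* then put it in the empty slot s of the top (if incomplete) or in    *)
(* slot s of a new level on top (if the top is complete).              *)
Definition move (n : nat) (Q Q' : config n) : Prop :=
  let h := size Q in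
  let top := last set0 Q in
  exists (i : nat) (j s : 'I_n),
    [/\ i.+1 < h,
        j \in nth set0 Q i,
        (#|top| < n -> i.+2 != h) &
        let Q1 := set_nth set0 Q i (nth set0 Q i :\ j) in
        if #|top| < n then s \notin top /\ Q' = set_nth set0 Q1 h.-1 (s |: top)
        else Q' = rcons Q1 [set s]].

Local Unset Implicit Arguments.
Inductive reachable (n k : nat) : config n -> Prop :=
  | reach0 : reachable n k (initial n k)
  | reachS (Q Q' : config n) : reachable n k Q -> move Q Q' -> reachable n k Q'.

Local Set Implicit Arguments.
Definition jenga_like (n k : nat) (Q : config n) : Prop :=
  reachable n k Q /\ all (fun L => L != set0) Q.

(* Geometry.  Unit cube with integer corner (a,b,c) is                 *)
(* [a,a+1]x[b,b+1]x[c,c+1].  Level c+1 occupies heights [c,c+1]; if    *)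
(* c+1 is odd a block in slot j fills all cubes (_, j-1, c), if c+1 is *)
(* even it fills all cubes (j-1, _, c).                                *)

Definition occ_cube (n : nat) (Q : config n) (a b c : nat) : bool :=
  [&& a < n, b < n, c < size Q &
      [exists j : 'I_n,
         (j \in nth set0 Q c) && (val j == (if ~~ odd c then b else a))]].

(* Cells of the cubical lattice in doubled integer coordinates: a cell *)
(* is (u,v,w) : int^3; an odd coordinate u means the open interval     *)
(* (u-1,u+1)/2, an even one the point u/2.  Cubes have three odd       *)
(* coordinates (cube (a,b,c) <-> (2a+1,2b+1,2c+1)), square faces two,  *)
(* edges one, vertices none.                                           *)
Definition oddz (u : int) : bool := odd `|u|%N.

Definition nodd (u v w : int) : nat := oddz u + oddz v + oddz w.

Definition occD (n : nat) (Q : config n) (u v w : int) : bool :=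
  [&& (0 < u)%R, (0 < v)%R, (0 < w)%R, oddz u, oddz v, oddz w &
      occ_cube Q (`|u|%N)./2 (`|v|%N)./2 (`|w|%N)./2].

(* A square face of the lattice lies on the boundary of the union of   *)
(* the blocks iff exactly one of its two adjacent cubes is occupied.   *)
Definition bface (n : nat) (Q : config n) (u v w : int) : bool :=
  (nodd u v w == 2) &&
  [|| ~~ oddz u && (occD Q (u - 1) v w != occD Q (u + 1) v w),
      ~~ oddz v && (occD Q u (v - 1) w != occD Q u (v + 1) w)
    | ~~ oddz w && (occD Q u v (w - 1) != occD Q u v (w + 1))]%R.

Definition subcoord (c f : int) : bool :=
  if oddz f then (`|c - f|%N <= 1)%N else c == f.

Definition subcell (c f : int * int * int) : bool :=
  [&& subcoord c.1.1 f.1.1, subcoord c.1.2 f.1.2 & subcoord c.2 f.2].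

(* finite box of doubled coordinates containing every boundary cell    *)
Definition cellT (n h : nat) :=
  ('I_(2 * n).+1 * 'I_(2 * n).+1 * 'I_(2 * h).+1)%type.

Definition toZ (n h : nat) (c : cellT n h) : int * int * int :=
  (Posz (val c.1.1), Posz (val c.1.2), Posz (val c.2)).

(* the cells of dimension d of the boundary surface (as a cubical      *)
(* complex: boundary squares together with their edges and vertices)   *)
Definition bcells (n : nat) (Q : config n) (d : nat) : {set cellT n (size Q)} :=
  [set c : cellT n (size Q) |
     (nodd (toZ c).1.1 (toZ c).1.2 (toZ c).2 == d) &&
     [exists f : cellT n (size Q),
        bface Q (toZ f).1.1 (toZ f).1.2 (toZ f).2 && subcell (toZ c) (toZ f)]].

Definition euler_char (n : nat) (Q : config n) : int :=
  (#|bcells Q 0|%:Z - #|bcells Q 1|%:Z + #|bcells Q 2|%:Z)%R.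

(* genus g(Q) of the (connected, closed, orientable) boundary surface, *)
(* via chi = 2 - 2g                                                    *)
Definition genus (n : nat) (Q : config n) : rat :=
  ((2 - euler_char Q)%:~R / 2)%R.

Arguments jenga_like : clear implicits.

(* Main.v *)
Require Import Defs.
From HB Require Import structures.
From mathcomp Require Import all_boot all_order all_algebra.
From mathcomp Require Import zify ring lra.
Set Implicit Arguments. Unset Strict Implicit. Unset Printing Implicit Defensive.
Import Order.TTheory GRing.Theory Num.Theory.

Definition runs (p : nat -> bool) (N : nat) : nat :=
  \sum_(0 <= x < N) (p x && ~~ ((0 < x) && p x.-1)).

Lemma runs_half p N : 2 * runs p N <= N + ((0 < N) && p N.-1).
Proof.
elim: N => [|N IH]; first by rewrite /runs big_geq.
rewrite /runs big_nat_recr //= -/(runs p N).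
move: IH; case: N => [|N] /=.
  rewrite /runs big_geq //= => _; case: (p 0) => //.
case: (p N); case: (p N.+1) => /=; lia.
Qed.

Lemma runs_cnt p N : runs p N <= \sum_(0 <= x < N) p x.
Proof. by rewrite /runs; apply: leq_sum => x _; case: (p x) => //=; rewrite leq_b1. Qed.

Lemma runs_full N : 0 < N -> runs (fun a => a < N) N = 1.
Proof.
move=> N0; rewrite /runs big_ltn //= (eq_big_nat _ _ (F2 := fun _ => 0)).
  by rewrite N0 /= big1.
move=> x /andP[x1 xN] /=; rewrite xN /=.
have -> : x.-1 < N by lia.
by rewrite (leq_trans _ x1).
Qed.

Section Conf.
Variable n : nat.
Implicit Types Q : config n.

Definition ex Q (z a : nat) : bool :=
  [exists j : 'I_n, (j \in nth set0 Q z) && (val j == a)].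

Definition rr Q z := runs (ex Q z) n.
Definition sz Q z := #|nth set0 Q z|.
Definition tot Q := \sum_(L <- Q) #|L|.

Lemma ex_lt Q z a : ex Q z a -> a < n.
Proof. by case/existsP=> j /andP[_ /eqP <-]; apply: ltn_ord. Qed.

Lemma ex_size Q z a : ex Q z a -> z < size Q.
Proof.
case/existsP=> j /andP[jin _]; rewrite ltnNge; apply/negP => hz.
by move: jin; rewrite nth_default // in_set0.
Qed.

Lemma ex_ord Q z (j : 'I_n) : ex Q z j = (j \in nth set0 Q z).
Proof.
apply/existsP/idP => [[j' /andP[jin /eqP e]]|jin]; last by exists j; rewrite jin eqxx.
by have -> : j = j' by apply: val_inj.
Qed.

Lemma cnt_ex Q z : \sum_(0 <= a < n) ex Q z a = sz Q z.
Proof.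
rewrite big_mkord (eq_bigr (fun j => (j \in nth set0 Q z) : nat)); last by move=> j _; rewrite ex_ord.
by rewrite -big_mkcond /= sum1_card.
Qed.

Lemma rr_sz Q z : rr Q z <= sz Q z.
Proof. by rewrite -cnt_ex; apply: runs_cnt. Qed.

Lemma rr_half Q z : 2 * rr Q z <= n + 1.
Proof. by apply: leq_trans (runs_half _ _) _; rewrite leq_add2l; case: (_ && _). Qed.

Lemma rr_full Q z : 0 < n -> nth set0 Q z = setT -> rr Q z = 1.
Proof.
move=> n0 e; rewrite /rr -(runs_full n0); apply: eq_bigr => x _.
have E : forall a, ex Q z a = (a < n).
  move=> a; apply/idP/idP => [/ex_lt //|an].
  by rewrite (ex_ord Q z (Ordinal an)) e inE.
by rewrite !E.
Qed.

Lemma rr_out Q z : size Q <= z -> rr Q z = 0.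
Proof.
move=> hz; rewrite /rr /runs big1_seq // => x _.
have -> : ex Q z x = false by case E: (ex Q z x) => //; move: (ex_size E); rewrite ltnNge hz.
by [].
Qed.

Lemma tot_set_nth Q i X : i < size Q ->
  tot (set_nth set0 Q i X) + #|nth set0 Q i| = tot Q + #|X|.
Proof.
elim: Q i => [|L Q IH] [|i] //= hi; rewrite /tot !big_cons.
  by rewrite addnC -addnA [_ + #|X|]addnC.
by have := IH i hi; rewrite /tot -!addnA => <-.
Qed.

Lemma tot_rcons Q X : tot (rcons Q X) = tot Q + #|X|.
Proof. by rewrite /tot -cats1 big_cat big_seq1. Qed.

Lemma tot_nseq k X : tot (nseq k X) = k * #|X|.
Proof. by elim: k => [|k IH]; rewrite /tot ?big_nil //= big_cons -/(tot _) IH mulSn. Qed.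

Lemma full_of (L : {set 'I_n}) : ~~ (#|L| < n) -> L = setT.
Proof.
move=> h; apply/eqP; rewrite eqEcard subsetT cardsT card_ord.
by rewrite leqNgt.
Qed.

Definition jinv (k : nat) Q :=
  [/\ k <= size Q, nth set0 Q (size Q - 2) = setT, tot Q = n * k &
      n <= sz Q (size Q - 3) + sz Q (size Q).-1].

Lemma inv_init k : 3 <= k -> jinv k (initial n k).
Proof.
move=> k3; rewrite /jinv /initial /sz size_nseq tot_nseq !nth_nseq.
have -> : k - 2 < k by lia.
have -> : k - 3 < k by lia.
have -> : k.-1 < k by lia.
by rewrite !cardsT card_ord mulnC; split => //; rewrite leq_addr.
Qed.

Lemma inv_move k Q Q' : 3 <= k -> jinv k Q -> move Q Q' -> jinv k Q'.
Proof.
move=> k3 [hk hfull htot hcond] [i [j [s [hi hj htop hQ']]]].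
set h := size Q in hk hfull htot hcond hi htop hQ'.
set top := last set0 Q in htop hQ'.
set Q1 := set_nth set0 Q i (nth set0 Q i :\ j) in hQ'.
have sQ1 : size Q1 = h by rewrite size_set_nth; apply/maxn_idPr; lia.
have nQ1 z : nth set0 Q1 z = if z == i then nth set0 Q i :\ j else nth set0 Q z.
  by rewrite nth_set_nth.
have tQ1 : tot Q1 + 1 = tot Q.
  have := tot_set_nth (nth set0 Q i :\ j) (ltnW hi); rewrite -/Q1.
  rewrite (cardsD1 j (nth set0 Q i)) hj /=.
  by move: (tot Q1) (tot Q) (#|nth set0 Q i :\ j|) => a b c; lia.
have etop : top = nth set0 Q h.-1 by rewrite /top (last_nth set0) /h; case: (Q).
have cj z : #|nth set0 Q z| <= #|nth set0 Q1 z| + 1.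
  rewrite nQ1; case: eqP => [->|_]; last by rewrite leq_addr.
  rewrite (cardsD1 j (nth set0 Q i)) hj /=.
  by move: (#|nth set0 Q i :\ j|) => c; lia.
have tQ1h : nth set0 Q1 h.-1 = top by rewrite nQ1 etop; case: eqP => // e; lia.
move: hQ' => /=; case: ifP => [tlt [sni ->]|tge ->].
  have hi2 : i.+2 != h by apply: htop.
  rewrite /jinv size_set_nth sQ1; have -> : maxn h.-1.+1 h = h by lia.
  split => //.
  - rewrite nth_set_nth /=; case: eqP => [e|_]; first by lia.
    by rewrite nQ1; case: eqP => [e|_] //; lia.
  - have := tot_set_nth (s |: top) (_ : h.-1 < size Q1); rewrite sQ1 tQ1h => /(_ ltac:(lia)).
    rewrite cardsU1 sni /=.
    by move: tQ1 htot; move: (tot Q1) (tot Q) (tot (set_nth set0 Q1 h.-1 (s |: top))) (#|top|) => a b c d; lia.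
  - rewrite /sz !nth_set_nth /=; case: eqP => [e|_]; first by lia.
    rewrite eqxx cardsU1 sni /=.
    have := cj (h - 3); rewrite /sz in hcond; rewrite -etop in hcond.
    by move: hcond; move: (#|nth set0 Q (h - 3)|) (#|nth set0 Q1 (h - 3)|) (#|top|) => a b c; lia.
have tfull : top = setT by apply: full_of; rewrite tge.
rewrite /jinv size_rcons sQ1; split.
- by apply: leqW.
- rewrite nth_rcons sQ1; have -> : h.+1 - 2 < h by lia.
  have -> : h.+1 - 2 = h.-1 by lia.
  by rewrite tQ1h tfull.
- rewrite tot_rcons cards1.
  by move: tQ1 htot; move: (tot Q1) (tot Q) => a b; lia.
- rewrite /sz !nth_rcons sQ1 /=; have -> : h.+1 - 3 < h by lia.
  rewrite ltnn eqxx cards1.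
  have := cj (h.+1 - 3); have -> : h.+1 - 3 = h - 2 by lia.
  rewrite hfull cardsT card_ord.
  by move: (#|nth set0 Q1 (h - 2)|) => a; lia.
Qed.

Lemma inv_reach k Q : 3 <= k -> reachable n k Q -> jinv k Q.
Proof. by move=> k3; elim => [|Q0 Q1 _ IH hm]; [apply: inv_init|apply: inv_move hm]. Qed.

End Conf.

Section PartB.
Local Open Scope ring_scope.

Lemma telesc (R : nat -> int) h :
  R 0%N + \sum_(0 <= y < h) (R y + R y.+1 - 2 * R y * R y.+1) =
  2 * \sum_(0 <= y < h) R y + R h - 2 * \sum_(0 <= y < h) (R y * R y.+1).
Proof.
elim: h => [|h IH]; first by rewrite !big_geq //; ring.
rewrite !big_nat_recr //= addrA IH; ring.
Qed.

Lemma sum3 (F : nat -> int) M :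
  \sum_(0 <= y < M.+3) F y = \sum_(0 <= y < M) F y + F M + F M.+1 + F M.+2.
Proof. by rewrite !big_nat_recr //= !addrA. Qed.

Lemma sum3n (F : nat -> nat) M :
  (\sum_(0 <= y < M.+3) F y = \sum_(0 <= y < M) F y + F M + F M.+1 + F M.+2)%N.
Proof. by rewrite !big_nat_recr //= !addnA. Qed.

Lemma final_bound n k (Q : config n) : ~~ odd n -> (2 <= n)%N -> (3 <= k)%N -> jinv k Q ->
  euler_char Q = (rr Q 0)%:Z + \sum_(0 <= y < size Q)
      ((rr Q y)%:Z + (rr Q y.+1)%:Z - 2 * (rr Q y)%:Z * (rr Q y.+1)%:Z) ->
  2 - euler_char Q <= Posz (n * (n - 2) * (k - 2))%N.
Proof.
move=> ev n2 k3 [hk hfull htot hcond] ->.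
rewrite (telesc (fun y => (rr Q y)%:Z)) /= rr_out // addr0.
have [M hM] : exists M, size Q = M.+3 by exists (size Q - 3)%N; lia.
rewrite hM sum3 sum3.
have hM1 : rr Q M.+1 = 1%N.
  apply: rr_full; first lia.
  by move: hfull; rewrite hM; have -> : (M.+3 - 2 = M.+1)%N by lia.
rewrite hM1 (rr_out (z := M.+3)) ?hM //.
set A := \sum_(0 <= y < M) _.
set B := \sum_(0 <= y < M) _.
have EX : \sum_(0 <= y < M) ((rr Q y)%:Z * (2 * (rr Q y.+1)%:Z - 2)) = 2 * B - 2 * A.
  rewrite /A /B.
  rewrite (eq_bigr (fun y => 2 * ((rr Q y)%:Z * (rr Q y.+1)%:Z) - 2 * (rr Q y)%:Z)); last by move=> y _; ring.
  by rewrite sumrB -!mulr_sumr.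
apply: (le_trans (y := \sum_(0 <= y < M) ((rr Q y)%:Z * (2 * (rr Q y.+1)%:Z - 2)))).
  by rewrite EX; lra.
have [m hm] : exists m, n = (m.*2)%N by exists n./2; rewrite -[n in LHS]odd_double_half (negbTE ev).
have hr y : (rr Q y <= m)%N by have := rr_half Q y; move: (rr Q y) => r; lia.
apply: (le_trans (y := \sum_(0 <= y < M) ((sz Q y)%:Z * Posz (n - 2)%N))).
  apply: ler_sum => y _.
  apply: (le_trans (y := (rr Q y)%:Z * Posz (n - 2)%N)).
    apply: ler_wpM2l => //.
    by move: (hr y.+1); move: (rr Q y.+1) => r; lia.
  by apply: ler_wpM2r => //; rewrite lez_nat rr_sz.
rewrite -mulr_suml.
have hs : (\sum_(0 <= y < M) sz Q y <= n * (k - 2))%N.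
  move: htot hcond; rewrite /tot (big_nth set0) hM sum3n /sz.
  have -> : (M.+3 - 3 = M)%N by lia.
  have -> : (M.+3).-1 = M.+2 by [].
  move: hfull; rewrite hM; have -> : (M.+3 - 2 = M.+1)%N by lia.
  move=> ->; rewrite cardsT card_ord.
  move: (\sum_(0 <= i < M) #|nth set0 Q i|)%N (#|nth set0 Q M|) (#|nth set0 Q M.+2|) => a b c.
  by nia.
rewrite -(big_morph Posz PoszD (erefl 0%:Z)) -PoszM lez_nat.
have -> : (n * (n - 2) * (k - 2) = n * (k - 2) * (n - 2))%N by ring.
by rewrite leq_mul2r hs orbT.
Qed.

End PartB.


Definition Nn (u : nat) : seq nat := if odd u then [:: u] else [:: u.-1; u.+1].

Lemma Nn_mem x u : (x \in Nn u) = if odd u then x == u else (x == u.-1) || (x == u.+1).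
Proof. by rewrite /Nn; case: (odd u); rewrite !inE. Qed.

Lemma subcoordE x y : subcoord (Posz x) (Posz y) = if odd y then y \in Nn x else x == y.
Proof.
rewrite /subcoord /oddz /= Nn_mem.
case: (boolP (odd y)) => oy; last by [].
case: (boolP (odd x)) => ox; lia.
Qed.

Section Geo.
Variable n : nat.
Variable Q : config n.
Local Notation H := (size Q).

Definition occN (a b c : nat) := occD Q (Posz a) (Posz b) (Posz c).

Definition someN u v w :=
  has (fun c => has (fun a => has (fun b => occN a b c) (Nn v)) (Nn u)) (Nn w).
Definition allN u v w :=
  all (fun c => all (fun a => all (fun b => occN a b c) (Nn v)) (Nn u)) (Nn w).

Lemma occN_facts a b c : occN a b c ->
  [/\ odd a, odd b, odd c & [/\ (a./2 < n)%N, (b./2 < n)%N & (c./2 < H)%N]].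
Proof.
rewrite /occN /occD /oddz /= /occ_cube.
by case/andP=> _ /andP[_ /andP[_ /andP[oa /andP[ob /andP[oc /and4P[an bn cH _]]]]]].
Qed.

Lemma occD_m1 a b c : occD Q (Posz a - 1)%R (Posz b) (Posz c) = occN a.-1 b c.
Proof. by case: a => [|a]; rewrite /occN /= //; rewrite -addn1 PoszD addrK. Qed.
Lemma occD_p1 a b c : occD Q (Posz a + 1)%R (Posz b) (Posz c) = occN a.+1 b c.
Proof. by rewrite /occN -[a.+1]addn1 PoszD. Qed.
Lemma occD_m2 a b c : occD Q (Posz a) (Posz b - 1)%R (Posz c) = occN a b.-1 c.
Proof.
by case: b => [|b]; rewrite /occN /= ?andbF //; rewrite -addn1 PoszD addrK.
Qed.
Lemma occD_p2 a b c : occD Q (Posz a) (Posz b + 1)%R (Posz c) = occN a b.+1 c.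
Proof. by rewrite /occN -[b.+1]addn1 PoszD. Qed.
Lemma occD_m3 a b c : occD Q (Posz a) (Posz b) (Posz c - 1)%R = occN a b c.-1.
Proof.
by case: c => [|c]; rewrite /occN /= ?andbF //; rewrite -addn1 PoszD addrK.
Qed.
Lemma occD_p3 a b c : occD Q (Posz a) (Posz b) (Posz c + 1)%R = occN a b c.+1.
Proof. by rewrite /occN -[c.+1]addn1 PoszD. Qed.


Lemma someN_intro a b c u v w : a \in Nn u -> b \in Nn v -> c \in Nn w -> occN a b c -> someN u v w.
Proof.
move=> ha hb hc o; apply/hasP; exists c => //; apply/hasP; exists a => //.
by apply/hasP; exists b.
Qed.

Lemma allN_elim a b c u v w : a \in Nn u -> b \in Nn v -> c \in Nn w -> allN u v w -> occN a b c.
Proof. by move=> ha hb hc /allP/(_ c hc)/allP/(_ a ha)/allP/(_ b hb). Qed.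

Lemma mixed_of a b c a' b' c' u v w :
  a \in Nn u -> b \in Nn v -> c \in Nn w ->
  a' \in Nn u -> b' \in Nn v -> c' \in Nn w ->
  occN a b c != occN a' b' c' -> someN u v w && ~~ allN u v w.
Proof.
move=> ha hb hc ha' hb' hc'; case E: (occN a b c); case E': (occN a' b' c') => // _.
  rewrite (someN_intro ha hb hc E) /=; apply/negP => /(allN_elim ha' hb' hc'); by rewrite E'.
rewrite (someN_intro ha' hb' hc' E') /=; apply/negP => /(allN_elim ha hb hc); by rewrite E.
Qed.

Lemma fwd u v w fu fv fw : bface Q (Posz fu) (Posz fv) (Posz fw) ->
  subcell (Posz u, Posz v, Posz w) (Posz fu, Posz fv, Posz fw) -> someN u v w && ~~ allN u v w.
Proof.
rewrite /bface /subcell /nodd /oddz /= !subcoordE.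
case/andP=> hn /or3P[/andP[ofu hd]|/andP[ofv hd]|/andP[ofw hd]].
- have ov : odd fv by lia.
  have ow : odd fw by lia.
  rewrite ov ow (negbTE ofu) => /and3P[/eqP eu hv hw].
  rewrite occD_m1 occD_p1 in hd.
  by apply: (mixed_of _ hv hw _ hv hw hd); rewrite Nn_mem eu (negbTE ofu) eqxx ?orbT.
- have ou : odd fu by lia.
  have ow : odd fw by lia.
  rewrite ou ow (negbTE ofv) => /and3P[hu /eqP ev hw].
  rewrite occD_m2 occD_p2 in hd.
  by apply: (mixed_of hu _ hw hu _ hw hd); rewrite Nn_mem ev (negbTE ofv) eqxx ?orbT.
- have ou : odd fu by lia.
  have ov : odd fv by lia.
  rewrite ou ov (negbTE ofw) => /and3P[hu hv /eqP ew].
  rewrite occD_m3 occD_p3 in hd.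
  by apply: (mixed_of hu hv _ hu hv _ hd); rewrite Nn_mem ew (negbTE ofw) eqxx ?orbT.
Qed.


Lemma two_nb a a' u : a \in Nn u -> a' \in Nn u -> a != a' ->
  ~~ odd u /\ ((a == u.-1) && (a' == u.+1) || (a == u.+1) && (a' == u.-1)).
Proof.
rewrite !Nn_mem; case: (odd u).
  by move=> /eqP-> /eqP->; rewrite eqxx.
move=> h1 h2 h3; split => //; lia.
Qed.

Definition goodf u v w := exists f : cellT n H,
  bface Q (toZ f).1.1 (toZ f).1.2 (toZ f).2 && subcell (Posz u, Posz v, Posz w) (toZ f).

Lemma occ_one a b c a' b' c' : occN a b c != occN a' b' c' -> occN a b c || occN a' b' c'.
Proof. by case: (occN a b c); case: (occN a' b' c'). Qed.

Lemma stepX u v w a a' b c : (u < (2*n).+1)%N -> a \in Nn u -> a' \in Nn u -> b \in Nn v -> c \in Nn w ->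
  occN a b c != occN a' b c -> goodf u v w.
Proof.
move=> hu ha ha' hb hc hd.
have neq : a != a' by apply: contraNneq hd => ->.
have [ou hcase] := two_nb ha ha' neq.
have [ob oc hb2 hc2] : [/\ odd b, odd c, (b < (2*n).+1)%N & (c < (2*H).+1)%N].
  by case/orP: (occ_one hd) => /occN_facts [_ ob oc [_ hb' hc']]; split => //; lia.
exists ((Ordinal hu, Ordinal hb2), Ordinal hc2).
rewrite /toZ /= /bface /subcell /nodd /oddz /= !subcoordE (negbTE ou) ob oc /= eqxx hb hc /=.
rewrite occD_m1 occD_p1.
by move: hd; case/orP: hcase => /andP[/eqP-> /eqP->] hd; rewrite ?hd // eq_sym hd.
Qed.

Lemma stepY u v w a b b' c : (v < (2*n).+1)%N -> a \in Nn u -> b \in Nn v -> b' \in Nn v -> c \in Nn w ->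
  occN a b c != occN a b' c -> goodf u v w.
Proof.
move=> hv ha hb hb' hc hd.
have neq : b != b' by apply: contraNneq hd => ->.
have [ov hcase] := two_nb hb hb' neq.
have [oa oc ha2 hc2] : [/\ odd a, odd c, (a < (2*n).+1)%N & (c < (2*H).+1)%N].
  by case/orP: (occ_one hd) => /occN_facts [oa _ oc [ha' _ hc']]; split => //; lia.
exists ((Ordinal ha2, Ordinal hv), Ordinal hc2).
rewrite /toZ /= /bface /subcell /nodd /oddz /= !subcoordE (negbTE ov) oa oc /= eqxx ha hc /=.
rewrite occD_m2 occD_p2.
by move: hd; case/orP: hcase => /andP[/eqP-> /eqP->] hd; rewrite ?hd // eq_sym hd.
Qed.

Lemma stepZ u v w a b c c' : (w < (2*H).+1)%N -> a \in Nn u -> b \in Nn v -> c \in Nn w -> c' \in Nn w ->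
  occN a b c != occN a b c' -> goodf u v w.
Proof.
move=> hw ha hb hc hc' hd.
have neq : c != c' by apply: contraNneq hd => ->.
have [ow hcase] := two_nb hc hc' neq.
have [oa ob ha2 hb2] : [/\ odd a, odd b, (a < (2*n).+1)%N & (b < (2*n).+1)%N].
  by case/orP: (occ_one hd) => /occN_facts [oa ob _ [ha' hb' _]]; split => //; lia.
exists ((Ordinal ha2, Ordinal hb2), Ordinal hw).
rewrite /toZ /= /bface /subcell /nodd /oddz /= !subcoordE (negbTE ow) oa ob /= eqxx ha hb /=.
rewrite occD_m3 occD_p3.
by move: hd; case/orP: hcase => /andP[/eqP-> /eqP->] hd; rewrite ?hd // eq_sym hd.
Qed.


Lemma bwd u v w : (u < (2*n).+1)%N -> (v < (2*n).+1)%N -> (w < (2*H).+1)%N ->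
  someN u v w -> ~~ allN u v w -> goodf u v w.
Proof.
move=> hu hv hw /hasP[c1 hc1 /hasP[a1 ha1 /hasP[b1 hb1 o1]]].
move=> /allPn[c0 hc0 /allPn[a0 ha0 /allPn[b0 hb0 o0]]].
case E1: (occN a1 b0 c0).
  by apply: (stepX hu ha0 ha1 hb0 hc0); rewrite E1 (negbTE o0).
case E2: (occN a1 b1 c0).
  by apply: (stepY hv ha1 hb0 hb1 hc0); rewrite E1 E2.
by apply: (stepZ hw ha1 hb1 hc0 hc1); rewrite E2 o1.
Qed.

Lemma L1 (c : cellT n H) :
  [exists f : cellT n H, bface Q (toZ f).1.1 (toZ f).1.2 (toZ f).2 && subcell (toZ c) (toZ f)]
  = someN c.1.1 c.1.2 c.2 && ~~ allN c.1.1 c.1.2 c.2.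
Proof.
apply/existsP/idP.
  by case=> f /andP[hb hs]; apply: (fwd hb hs).
by case/andP=> hs ha; apply: (bwd (ltn_ord _) (ltn_ord _) (ltn_ord _) hs ha).
Qed.

End Geo.


Definition phi (p : nat -> bool) (x : nat) := odd x && p x./2.
Definition hasN p u := has (phi p) (Nn u).
Definition allN1 p u := all (phi p) (Nn u).

Lemma has_andl (b : bool) (p : pred nat) l : has (fun x => b && p x) l = b && has p l.
Proof. by case: b => //=; elim: l. Qed.

Lemma all_andl (b : bool) (p : pred nat) l : l != [::] -> all (fun x => b && p x) l = b && all p l.
Proof.
case: l => // x l _ /=; elim: l => /= [|y l]; first by case: b; case: (p x).
by case: b; case: (p x) => //=; case: (p y).
Qed.

Lemma Nn_nil u : Nn u != [::].
Proof. by rewrite /Nn; case: (odd u). Qed.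

Lemma has2 (P R : pred nat) l1 l2 :
  has (fun a => has (fun b => P a && R b) l2) l1 = has P l1 && has R l2.
Proof. by elim: l1 => //= a l1 ->; rewrite has_andl andb_orl. Qed.

Lemma all2' (P R : pred nat) l1 l2 : l1 != [::] -> l2 != [::] ->
  all (fun a => all (fun b => P a && R b) l2) l1 = all P l1 && all R l2.
Proof.
move=> h1 h2; rewrite (eq_all (a2 := fun a => P a && all R l2)); last by move=> a /=; rewrite all_andl.
elim: l1 h1 => // x l IH _; rewrite [LHS]/= [in RHS]/=.
case: l IH => [|y l] IH; first by rewrite /= !andbT.
rewrite IH //.
by case: (P x); case: (all P (y :: l)); case: (all R l2).
Qed.

Section Fact.
Variable n : nat.
Variable Q : config n.
Local Notation H := (size Q).

Definition PA z : nat -> bool := if odd z then ex Q z else (fun a => a < n).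
Definition PB z : nat -> bool := if odd z then (fun a => a < n) else ex Q z.

Lemma occN_E a b c : occN Q a b c = (odd c && phi (PA c./2) a) && phi (PB c./2) b.
Proof.
rewrite /occN /occD /oddz /occ_cube /= /phi /PA /PB.
have E : forall z t, [exists j : 'I_n, (j \in nth set0 Q z) && (val j == t)] = ex Q z t by [].
rewrite E.
case: (boolP (odd a)) => oa; last by rewrite !andbF.
case: (boolP (odd b)) => ob; last by rewrite !andbF.
case: (boolP (odd c)) => oc; last by rewrite !andbF.
rewrite !ltz_nat.
have -> : (0 < a)%N by lia.
have -> : (0 < b)%N by lia.
have -> : (0 < c)%N by lia.
rewrite /=; case: (odd c./2) => /=.
  case E1: (ex Q c./2 a./2); last by rewrite !andbF.
  by rewrite (ex_lt E1) (ex_size E1) /= andbT.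
case E1: (ex Q c./2 b./2); last by rewrite !andbF.
by rewrite (ex_lt E1) (ex_size E1) /= andbT.
Qed.

Lemma someN_E u v w : someN Q u v w =
  has (fun c => odd c && (hasN (PA c./2) u && hasN (PB c./2) v)) (Nn w).
Proof.
apply: eq_has => c /=.
rewrite (eq_has (a2 := fun a => has (fun b => (odd c && phi (PA c./2) a) && phi (PB c./2) b) (Nn v))).
  by rewrite has2 has_andl andbA.
by move=> a /=; apply: eq_has => b; rewrite occN_E.
Qed.

Lemma allN_E u v w : allN Q u v w =
  all (fun c => odd c && (allN1 (PA c./2) u && allN1 (PB c./2) v)) (Nn w).
Proof.
apply: eq_all => c /=.
rewrite (eq_all (a2 := fun a => all (fun b => (odd c && phi (PA c./2) a) && phi (PB c./2) b) (Nn v))).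
  by rewrite all2' ?Nn_nil // all_andl ?Nn_nil // andbA.
by move=> a /=; apply: eq_all => b; rewrite occN_E.
Qed.

End Fact.

Section PartD.
Local Open Scope ring_scope.
Definition sg (u : nat) : int := if odd u then -1 else 1.
Definition bz (b : bool) : int := if b then 1 else 0.

Lemma bz_and a b : bz (a && b) = bz a * bz b.
Proof. by case: a; case: b; rewrite /= ?mulr0 ?mulr1. Qed.
Lemma bz_or a b : bz (a || b) = bz a + bz b - bz a * bz b.
Proof. by case: a; case: b. Qed.
Lemma bz_orn a b : bz (a || b) = bz a + bz (b && ~~ a).
Proof. by case: a; case: b. Qed.
Lemma bz_andn a b : bz (a && b) = bz b - bz (b && ~~ a).
Proof. by case: a; case: b. Qed.
Lemma bz_nat (b : bool) : Posz b = bz b.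
Proof. by case: b. Qed.

Lemma split2 (G : nat -> int) N :
  \sum_(0 <= u < N.*2.+1) G u = \sum_(0 <= x < N.+1) G x.*2 + \sum_(0 <= a < N) G a.*2.+1.
Proof.
elim: N => [|N IH]; first by rewrite big_nat1 big_nat1 big_geq // addr0.
have -> : (N.+1).*2.+1 = (N.*2.+1).+2 by rewrite doubleS.
rewrite big_nat_recr //= big_nat_recr //= IH.
rewrite [X in _ = X + _]big_nat_recr //= [X in _ = _ + X]big_nat_recr //= doubleS.
by ring.
Qed.

Lemma phi_em p x : phi p (x.*2).-1 = (0 < x)%N && p x.-1.
Proof.
case: x => [|x] //; rewrite /phi.
have -> : ((x.+1).*2).-1./2 = x by lia.
have -> : odd ((x.+1).*2).-1 = true by lia.
by [].
Qed.

Lemma phi_o p a : phi p (a.*2.+1) = p a.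
Proof.
rewrite /phi; have -> : (a.*2.+1)./2 = a by lia.
have -> : odd (a.*2.+1) = true by lia.
by [].
Qed.

Lemma phi_ep p x : phi p (x.*2).+1 = p x.
Proof. exact: phi_o. Qed.

Lemma hasN_e p x : hasN p x.*2 = ((0 < x)%N && p x.-1) || p x.
Proof. by rewrite /hasN /Nn odd_double /= phi_em phi_ep orbF. Qed.
Lemma hasN_o p a : hasN p a.*2.+1 = p a.
Proof. by rewrite /hasN /Nn /= odd_double /= phi_o orbF. Qed.
Lemma allN1_e p x : allN1 p x.*2 = ((0 < x)%N && p x.-1) && p x.
Proof. by rewrite /allN1 /Nn odd_double /= phi_em phi_ep andbT. Qed.
Lemma allN1_o p a : allN1 p a.*2.+1 = p a.
Proof. by rewrite /allN1 /Nn /= odd_double /= phi_o andbT. Qed.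

Section FE.
Variable n : nat.
Definition Fs p := \sum_(0 <= u < n.*2.+1) sg u * bz (hasN p u).
Definition Es p := \sum_(0 <= u < n.*2.+1) sg u * bz (allN1 p u).

Lemma runsZ (p : nat -> bool) : Posz (runs p n) = \sum_(0 <= x < n) bz (p x && ~~ ((0 < x)%N && p x.-1)).
Proof.
rewrite /runs (big_morph Posz PoszD (erefl 0%:Z)).
by apply: eq_bigr => x _; rewrite bz_nat.
Qed.

Lemma Fs_runs (p : nat -> bool) : (forall a, p a -> a < n)%N -> Fs p = Posz (runs p n).
Proof.
move=> hp; rewrite /Fs split2.
have S1 : \sum_(0 <= x < n.+1) sg x.*2 * bz (hasN p x.*2) =
          \sum_(0 <= x < n.+1) (bz ((0 < x)%N && p x.-1) + bz (p x && ~~ ((0 < x)%N && p x.-1))).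
  by apply: eq_bigr => x _; rewrite /sg odd_double mul1r hasN_e bz_orn.
have S2 : \sum_(0 <= a < n) sg a.*2.+1 * bz (hasN p a.*2.+1) = - \sum_(0 <= a < n) bz (p a).
  by rewrite -sumrN; apply: eq_bigr => a _; rewrite /sg /= odd_double /= hasN_o mulN1r.
have pn : p n = false by apply/negP => /hp; rewrite ltnn.
rewrite S1 S2 big_split /= big_nat_recl //= big_nat_recr //= pn /= addr0 add0r runsZ.
by rewrite addrAC addrN add0r.
Qed.

Lemma Es_runs (p : nat -> bool) : (forall a, p a -> a < n)%N -> Es p = - Posz (runs p n).
Proof.
move=> hp; rewrite /Es split2.
have S1 : \sum_(0 <= x < n.+1) sg x.*2 * bz (allN1 p x.*2) =
          \sum_(0 <= x < n.+1) (bz (p x) - bz (p x && ~~ ((0 < x)%N && p x.-1))).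
  by apply: eq_bigr => x _; rewrite /sg odd_double mul1r allN1_e bz_andn.
have S2 : \sum_(0 <= a < n) sg a.*2.+1 * bz (allN1 p a.*2.+1) = - \sum_(0 <= a < n) bz (p a).
  by rewrite -sumrN; apply: eq_bigr => a _; rewrite /sg /= odd_double /= allN1_o mulN1r.
have pn : p n = false by apply/negP => /hp; rewrite ltnn.
rewrite S1 S2 sumrB big_nat_recr //= [X in _ - X + _]big_nat_recr //= pn /= !addr0 runsZ.
by ring.
Qed.

End FE.

End PartD.

Section PartE.
Local Open Scope ring_scope.

Lemma sumsum (f g : nat -> int) N M :
  \sum_(0 <= u < N) \sum_(0 <= v < M) (f u * g v) =
  (\sum_(0 <= u < N) f u) * (\sum_(0 <= v < M) g v).
Proof. by rewrite big_distrl; apply: eq_bigr => u _; rewrite big_distrr. Qed.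

Section Chi.
Variable n : nat.
Variable Q : config n.
Local Notation H := (size Q).

Definition Gs (X : pred nat) := \sum_(0 <= u < n.*2.+1) sg u * bz (X u).

Definition inner w := \sum_(0 <= u < n.*2.+1) \sum_(0 <= v < n.*2.+1)
  (sg u * sg v * (bz (someN Q u v w) - bz (allN Q u v w))).

Lemma dsum1 (X Y X' Y' : pred nat) :
  \sum_(0 <= u < n.*2.+1) \sum_(0 <= v < n.*2.+1)
     (sg u * sg v * (bz (X u && Y v) - bz (X' u && Y' v))) =
  Gs X * Gs Y - Gs X' * Gs Y'.
Proof.
rewrite /Gs -!sumsum -sumrB; apply: eq_bigr => u _; rewrite -sumrB.
by apply: eq_bigr => v _; rewrite !bz_and; ring.
Qed.

Lemma dsum2 (X1 Y1 X2 Y2 Xm Ym Xa Ya : pred nat) :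
  (forall u, X1 u && X2 u = Xm u) -> (forall v, Y1 v && Y2 v = Ym v) ->
  \sum_(0 <= u < n.*2.+1) \sum_(0 <= v < n.*2.+1)
     (sg u * sg v * (bz ((X1 u && Y1 v) || (X2 u && Y2 v)) - bz (Xa u && Ya v))) =
  Gs X1 * Gs Y1 + Gs X2 * Gs Y2 - Gs Xm * Gs Ym - Gs Xa * Gs Ya.
Proof.
move=> hX hY.
have E u v : sg u * sg v * (bz ((X1 u && Y1 v) || (X2 u && Y2 v)) - bz (Xa u && Ya v)) =
   (sg u * bz (X1 u)) * (sg v * bz (Y1 v)) + (sg u * bz (X2 u)) * (sg v * bz (Y2 v))
   - (sg u * bz (Xm u)) * (sg v * bz (Ym v)) - (sg u * bz (Xa u)) * (sg v * bz (Ya v)).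
  by rewrite bz_or !bz_and -(hX u) -(hY v) !bz_and; ring.
under eq_bigr => u _ do under eq_bigr => v _ do rewrite E.
under eq_bigr => u _ do rewrite sumrB sumrB big_split /=.
by rewrite sumrB sumrB big_split /= /Gs !sumsum.
Qed.

Lemma PA_lt z a : PA Q z a -> (a < n)%N.
Proof. by rewrite /PA; case: (odd z) => // /ex_lt. Qed.
Lemma PB_lt z a : PB Q z a -> (a < n)%N.
Proof. by rewrite /PB; case: (odd z) => // /ex_lt. Qed.

Lemma hasN_mono (p q : nat -> bool) u : (forall a, p a -> q a) -> hasN p u -> hasN q u.
Proof.
move=> h /hasP[x hx]; rewrite /phi => /andP[ox px].
by apply/hasP; exists x => //; rewrite /phi ox h.
Qed.
Lemma allN1_mono (p q : nat -> bool) u : (forall a, p a -> q a) -> allN1 p u -> allN1 q u.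
Proof.
move=> h /allP hx; apply/allP => x /hx; rewrite /phi => /andP[ox px].
by rewrite ox h.
Qed.

Lemma hasN_min (p q : nat -> bool) u : (forall a, p a -> q a) -> hasN p u && hasN q u = hasN p u.
Proof. by move=> h; case E: (hasN p u) => //=; apply: hasN_mono E. Qed.
Lemma allN1_min (p q : nat -> bool) u : (forall a, p a -> q a) -> allN1 p u && allN1 q u = allN1 p u.
Proof. by move=> h; case E: (allN1 p u) => //=; apply: allN1_mono E. Qed.

Lemma ex_ltn z a : ex Q z a -> (a < n)%N.
Proof. exact: ex_lt. Qed.

Lemma Fs_PA z : Fs n (PA Q z) = Posz (runs (PA Q z) n).
Proof. by apply: Fs_runs => a; apply: PA_lt. Qed.


Lemma someN_odd u v z : someN Q u v z.*2.+1 = hasN (PA Q z) u && hasN (PB Q z) v.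
Proof.
rewrite someN_E /Nn; have -> : odd z.*2.+1 = true by lia.
by rewrite has_seq1 /= odd_double uphalf_double.
Qed.
Lemma allN_odd u v z : allN Q u v z.*2.+1 = allN1 (PA Q z) u && allN1 (PB Q z) v.
Proof.
rewrite allN_E /Nn; have -> : odd z.*2.+1 = true by lia.
by rewrite all_seq1 /= odd_double uphalf_double.
Qed.
Lemma someN_0 u v : someN Q u v 0 = hasN (PA Q 0) u && hasN (PB Q 0) v.
Proof. by rewrite someN_E /= orbF. Qed.
Lemma allN_0 u v : allN Q u v 0 = false.
Proof. by rewrite allN_E. Qed.
Lemma someN_e u v y : someN Q u v (y.+1).*2 =
  (hasN (PA Q y) u && hasN (PB Q y) v) || (hasN (PA Q y.+1) u && hasN (PB Q y.+1) v).
Proof.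
rewrite someN_E /Nn; have -> : odd (y.+1).*2 = false by lia.
by rewrite /= !odd_double uphalf_double /= orbF.
Qed.
Lemma allN_e u v y : allN Q u v (y.+1).*2 =
  (allN1 (PA Q y) u && allN1 (PB Q y) v) && (allN1 (PA Q y.+1) u && allN1 (PB Q y.+1) v).
Proof.
rewrite allN_E /Nn; have -> : odd (y.+1).*2 = false by lia.
by rewrite /= !odd_double uphalf_double /= andbT.
Qed.

Lemma Gs_ext (X Y : pred nat) : (forall u, X u = Y u) -> Gs X = Gs Y.
Proof. by move=> h; apply: eq_bigr => u _; rewrite h. Qed.

Lemma Fs_ex z : Fs n (ex Q z) = Posz (rr Q z).
Proof. by apply: Fs_runs => a; apply: ex_lt. Qed.
Lemma Es_ex z : Es n (ex Q z) = - Posz (rr Q z).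
Proof. by apply: Es_runs => a; apply: ex_lt. Qed.
Lemma Fs_lt : (0 < n)%N -> Fs n (fun a => (a < n)%N) = 1.
Proof. by move=> n0; rewrite Fs_runs // runs_full. Qed.
Lemma Es_lt : (0 < n)%N -> Es n (fun a => (a < n)%N) = -1.
Proof. by move=> n0; rewrite Es_runs // runs_full. Qed.

Lemma inner_odd z : inner z.*2.+1 = 0.
Proof.
rewrite /inner.
under eq_bigr => u _ do under eq_bigr => v _ do rewrite someN_odd allN_odd.
rewrite dsum1.
have -> : Gs (fun u => hasN (PA Q z) u) = Posz (runs (PA Q z) n) by apply: Fs_runs => a; apply: PA_lt.
have -> : Gs (fun u => hasN (PB Q z) u) = Posz (runs (PB Q z) n) by apply: Fs_runs => a; apply: PB_lt.
have -> : Gs (fun u => allN1 (PA Q z) u) = - Posz (runs (PA Q z) n) by apply: Es_runs => a; apply: PA_lt.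
have -> : Gs (fun u => allN1 (PB Q z) u) = - Posz (runs (PB Q z) n) by apply: Es_runs => a; apply: PB_lt.
by ring.
Qed.

Lemma inner_0 : (0 < n)%N -> inner 0 = Posz (rr Q 0).
Proof.
move=> n0; rewrite /inner.
under eq_bigr => u _ do under eq_bigr => v _ do rewrite someN_0 allN_0 subr0 bz_and mulrACA.
rewrite sumsum.
have -> : \sum_(0 <= u < n.*2.+1) sg u * bz (hasN (PA Q 0) u) = 1 by apply: Fs_lt.
have -> : \sum_(0 <= u < n.*2.+1) sg u * bz (hasN (PB Q 0) u) = Posz (rr Q 0) by apply: Fs_ex.
by rewrite mul1r.
Qed.

Lemma and4 a b c d : (a && b) && (c && d) = (a && c) && (b && d).
Proof. by case: a; case: b; case: c; case: d. Qed.

Lemma inner_e y : (0 < n)%N -> inner (y.+1).*2 =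
  Posz (rr Q y) + Posz (rr Q y.+1) - 2 * Posz (rr Q y) * Posz (rr Q y.+1).
Proof.
move=> n0; rewrite /inner.
under eq_bigr => u _ do under eq_bigr => v _ do rewrite someN_e allN_e and4.
rewrite (@dsum2 _ _ _ _ (fun u => hasN (PA Q y) u && hasN (PA Q y.+1) u)
                        (fun v => hasN (PB Q y) v && hasN (PB Q y.+1) v)) //.
have LT z : forall a, ex Q z a -> (a < n)%N by move=> a; apply: ex_lt.
have hex z : Gs (fun u => hasN (ex Q z) u) = Posz (rr Q z) by apply: Fs_ex.
have aex z : Gs (fun u => allN1 (ex Q z) u) = - Posz (rr Q z) by apply: Es_ex.
have hlt : Gs (fun u => hasN (fun a => (a < n)%N) u) = 1 by apply: Fs_lt.
have m1 z : Gs (fun u => hasN (ex Q z) u && hasN (fun a => (a < n)%N) u) = Posz (rr Q z).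
  by rewrite -hex; apply: Gs_ext => u; apply: hasN_min; exact: LT.
have m2 z : Gs (fun u => hasN (fun a => (a < n)%N) u && hasN (ex Q z) u) = Posz (rr Q z).
  by rewrite -hex; apply: Gs_ext => u; rewrite andbC; apply: hasN_min; exact: LT.
have m3 z : Gs (fun u => allN1 (ex Q z) u && allN1 (fun a => (a < n)%N) u) = - Posz (rr Q z).
  by rewrite -aex; apply: Gs_ext => u; apply: allN1_min; exact: LT.
have m4 z : Gs (fun u => allN1 (fun a => (a < n)%N) u && allN1 (ex Q z) u) = - Posz (rr Q z).
  by rewrite -aex; apply: Gs_ext => u; rewrite andbC; apply: allN1_min; exact: LT.
case: (boolP (odd y)) => oy.
  have eA : PA Q y = ex Q y by rewrite /PA oy.
  have eB : PB Q y = (fun a => (a < n)%N) by rewrite /PB oy.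
  have eA1 : PA Q y.+1 = (fun a => (a < n)%N) by rewrite /PA /= oy.
  have eB1 : PB Q y.+1 = ex Q y.+1 by rewrite /PB /= oy.
  rewrite eA eB eA1 eB1 m1 m2 m3 m4 !hex hlt; ring.
have eA : PA Q y = (fun a => (a < n)%N) by rewrite /PA (negbTE oy).
have eB : PB Q y = ex Q y by rewrite /PB (negbTE oy).
have eA1 : PA Q y.+1 = ex Q y.+1 by rewrite /PA /= oy.
have eB1 : PB Q y.+1 = (fun a => (a < n)%N) by rewrite /PB /= oy.
rewrite eA eB eA1 eB1 m1 m2 m3 m4 !hex hlt; ring.
Qed.

End Chi.

End PartE.

Section PartF.
Local Open Scope ring_scope.

Lemma card_bz (T : finType) (P : pred T) : Posz #|[set c | P c]| = \sum_c bz (P c).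
Proof.
rewrite -sum1_card big_mkcond /= (big_morph Posz PoszD (erefl 0%:Z)).
by apply: eq_bigr => c _; rewrite inE; case: (P c).
Qed.

Section Fin.
Variable n : nat.
Variable Q : config n.
Local Notation H := (size Q).

Lemma allN_some u v w : allN Q u v w -> someN Q u v w.
Proof.
move=> ha.
have hd x : (if odd x then x else x.-1) \in Nn x by rewrite /Nn; case: (odd x); rewrite ?inE ?eqxx.
exact: (someN_intro (hd u) (hd v) (hd w) (allN_elim (hd u) (hd v) (hd w) ha)).
Qed.

Lemma all_odd_eq u v w : odd u -> odd v -> odd w -> someN Q u v w = allN Q u v w.
Proof. by move=> ou ov ow; rewrite /someN /allN /Nn ou ov ow /= ?orbF ?andbT. Qed.

Lemma pt u v w :
  bz (((odd u + odd v + odd w)%N == 0%N) && (someN Q u v w && ~~ allN Q u v w))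
  - bz (((odd u + odd v + odd w)%N == 1%N) && (someN Q u v w && ~~ allN Q u v w))
  + bz (((odd u + odd v + odd w)%N == 2%N) && (someN Q u v w && ~~ allN Q u v w))
  = sg u * sg v * sg w * (bz (someN Q u v w) - bz (allN Q u v w)).
Proof.
have h1 := @allN_some u v w.
have h2 := @all_odd_eq u v w.
rewrite /sg; move: h1 h2.
case: (odd u); case: (odd v); case: (odd w); case: (someN Q u v w); case: (allN Q u v w) => //= h1 h2;
  try (by have := h1 erefl); try (by have := h2 erefl erefl erefl).
Qed.


Lemma cell_sum (F : nat -> nat -> nat -> int) :
  \sum_(c : cellT n H) F c.1.1 c.1.2 c.2 =
  \sum_(0 <= w < H.*2.+1) \sum_(0 <= u < n.*2.+1) \sum_(0 <= v < n.*2.+1) F u v w.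
Proof.
rewrite -(pair_bigA _ (fun (i : 'I_(2*n).+1 * 'I_(2*n).+1) (j : 'I_(2*H).+1) => F i.1 i.2 j)) /=.
rewrite -(pair_bigA _ (fun (a b : 'I_(2*n).+1) => \sum_(j : 'I_(2*H).+1) F a b j)) /=.
under eq_bigr => a _ do rewrite exchange_big /=.
rewrite exchange_big /=.
rewrite -!mul2n big_mkord; apply: eq_bigr => w _.
rewrite big_mkord; apply: eq_bigr => u _.
by rewrite big_mkord.
Qed.

Lemma chi_formula : (0 < n)%N -> euler_char Q = Posz (rr Q 0) +
  \sum_(0 <= y < size Q) (Posz (rr Q y) + Posz (rr Q y.+1) - 2 * Posz (rr Q y) * Posz (rr Q y.+1)).
Proof.
move=> n0.
rewrite /euler_char /bcells !card_bz.
under eq_bigr => c _ do rewrite L1.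
under [X in _ - X + _]eq_bigr => c _ do rewrite L1.
under [X in _ + X]eq_bigr => c _ do rewrite L1.
rewrite -sumrB -big_split /=.
under eq_bigr => c _ do rewrite /nodd /toZ /oddz /= pt.
rewrite (cell_sum (fun u v w => sg u * sg v * sg w * (bz (someN Q u v w) - bz (allN Q u v w)))).
rewrite (eq_bigr (fun w => sg w * inner Q w)); last first.
  move=> w _; rewrite /inner mulr_sumr; apply: eq_bigr => u _.
  rewrite mulr_sumr; apply: eq_bigr => v _; ring.
rewrite split2.
rewrite [X in _ + X](eq_bigr (fun z => 0)); last by move=> z _; rewrite inner_odd mulr0.
rewrite big1_eq addr0 big_nat_recl //.
rewrite /sg odd_double mul1r inner_0 //; congr (_ + _).
by apply: eq_bigr => y _; rewrite odd_double mul1r inner_e.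
Qed.

End Fin.

End PartF.


Theorem mainTheorem5 (n k : nat) :
  ~~ odd n -> (2 <= n)%N -> (3 <= k)%N ->
  forall Q : config n, jenga_like n k Q ->
  (genus Q <= (n * (n - 2) * (k - 2))%:R / 2)%R.
Proof.
move=> ev n2 k3 Q [hr _].
have hinv := inv_reach k3 hr.
have n0 : (0 < n)%N by apply: leq_trans n2.
have hchi := chi_formula Q n0.
have hb := final_bound ev n2 k3 hinv hchi.
rewrite /genus; apply: ler_wpM2r; first by rewrite invr_ge0 ler0n.
by rewrite -[X in (_ <= X)%R]mulrz_nat ler_int natz.
Qed.
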